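(* Fix $\alpha\in(0,\tfrac12)$ and run Algorithm 2 (described in the context) with parameter $\alpha$ on any instance of dynamic bin packing with $n$ items. Then the algorithm makes at most $\frac{4\alpha}{1-2\alpha}\cdot n$ migrations.
   Context: Dynamic bin packing: bins have capacity $1$; items arrive online at times $a_i\ge0$ with size $s_i\in[0,1]$ and (unknown at arrival) duration $d_i>0$, and depart at $a_i+d_i$. The load of a bin is the total size of its items; a bin is open while nonempty. A migration is a move of one already placed item to a different bin. FirstFit with a given ordering of bins places an item into the first bin in the order with enough remaining capacity, or opens a new bin. Algorithm 1 (parameters $\alpha, f$): each bin is labeled Bad or Good. When an item $i$ of size $s_i$ arrives: if there is a Bad bin with load $\le 1-s_i$, put $i$ there, and if its load becomes $\ge f$ relabel it Good; otherwise, if there is a Good bin with load $\le1-s_i$, put $i$ into any such bin; otherwise open a new bin for $i$, labeled Bad if its load is $<f$ and Good otherwise. When an item departs: if its bin was Good and now has load $<\alpha$, migrate all items remaining in that bin using FirstFit with bins ordered Bad bins, then Good bins, then new bins. Algorithm 2 (parameter $\alpha$): an item has class $c\in\{0,1,2,\dots\}$ if its size lies in $(2^{-(c+1)},2^{-c}]$. Initialize a guess $\tilde\rho=1$, an instance of Algorithm 1 for class $0$ with parameters $(\alpha,\tfrac12)$, and one junk bin. For each arriving item: if the current number of items in the system is $\ge\tilde\rho$, double $\tilde\rho$, initialize a new instance of Algorithm 1 for class $c=\log_2\tilde\rho$ with parameters $(\alpha,1-2^{-c})$, and open a new junk bin for this guess. Then, if the item's class $c$ satisfies $c<\log_2\tilde\rho$,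 assign it using the Algorithm 1 instance for class $c$ (each instance uses its own bins); otherwise assign it to the junk bin of the current guess $\tilde\rho$. *)

(* Defs.v *)
From HB Require Import structures.
From mathcomp Require Import all_boot all_order all_algebra.
From mathcomp Require Import reals.
Set Implicit Arguments. Unset Strict Implicit. Unset Printing Implicit Defensive.
Import Order.TTheory GRing.Theory Num.Theory.
Local Open Scope ring_scope.

(* Dynamic bin packing with n items, Algorithm 1 / Algorithm 2 modelled as a
   nondeterministic transition relation: every choice left open by the paper
   ("any such bin", order of bins inside the Bad / Good groups, order in which
   the remaining items of a bin are migrated, which fresh bin is opened, tie
   breaking between simultaneous events) is universally quantified. *)

Section DBP.
Variable R : realType.
Variable n : nat.

Record instance := Instance {
  arr : 'I_n -> R;
  sz  : 'I_n -> R;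
  dur : 'I_n -> R }.

Definition valid_instance (I : instance) : Prop :=
  forall i, 0 <= arr I i /\ 0 <= sz I i <= 1 /\ 0 < dur I i.

(* inl i = arrival of item i (time a_i); inr i = departure of item i (time a_i+d_i) *)
Definition event := ('I_n + 'I_n)%type.

Definition ev_time (I : instance) (e : event) : R :=
  match e with inl i => arr I i | inr i => arr I i + dur I i end.

Definition valid_schedule (I : instance) (evs : seq event) : Prop :=
  perm_eq evs ([seq (inl i : event) | i <- enum 'I_n] ++
               [seq (inr i : event) | i <- enum 'I_n]) /\
  sorted (fun e1 e2 : event => ev_time I e1 <= ev_time I e2) evs.

(* Where an item sits: inl (c, b) = bin number b of the Algorithm 1 instance
   for class c;  inr k = the junk bin of the guess rho = 2^k. *)
Definition place := ((nat * nat) + nat)%type.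

(* guess = log2 of the current guess rho;  loc i = bin of item i (None if the
   item is not in the system);  good c b = label of bin b of instance c
   (true = Good, false = Bad). *)
Record state := State {
  guess : nat;
  loc : 'I_n -> option place;
  good : nat -> nat -> bool }.

Definition init_state : state := State 0 (fun _ => None) (fun _ _ => false).

Definition upd_loc (l : 'I_n -> option place) (i : 'I_n) (p : option place) :=
  fun j => if j == i then p else l j.

Definition upd_lab (g : nat -> nat -> bool) (c b : nat) (v : bool) :=
  fun c' b' => if (c' == c) && (b' == b) then v else g c' b'.

Definition move (st : state) (i : 'I_n) (p : option place) : state :=
  State (guess st) (upd_loc (loc st) i p) (good st).

Definition relabel (st : state) (c b : nat) (v : bool) : state :=
  State (guess st) (loc st) (upd_lab (good st) c b v).

Definition nitems (st : state) : nat := #|[pred i : 'I_n | loc st i != None]|.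

Definition in_bin (st : state) (c b : nat) (i : 'I_n) : bool :=
  loc st i == Some (inl (c, b)).

Definition is_open (st : state) (c b : nat) : bool := [exists i, in_bin st c b i].

Definition load (I : instance) (st : state) (c b : nat) : R :=
  \sum_(i < n | in_bin st c b i) sz I i.

Definition class_of (x : R) (c : nat) : Prop := 2%:R ^- c.+1 < x <= 2%:R ^- c.

(* parameter f of the Algorithm 1 instance for class c:
   1/2 for the initial instance (class 0), 1 - 2^-c for class c >= 1 *)
Definition fpar (c : nat) : R := if c is 0 then 2^-1 else 1 - 2%:R ^- c.

(* For an already open
   bin: Bad -> Good if the load becomes >= f (no-op for a Good bin). *)
Definition put_open (I : instance) (st : state) (c b : nat) (i : 'I_n) : state :=
  let st1 := move st i (Some (inl (c, b))) in
  if fpar c <= load I st c b + sz I i then relabel st1 c b true else st1.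

Definition put_new (I : instance) (st : state) (c b : nat) (i : 'I_n) : state :=
  relabel (move st i (Some (inl (c, b)))) c b (fpar c <= sz I i).

Definition fits (I : instance) (st : state) (c b : nat) (i : 'I_n) : bool :=
  load I st c b <= 1 - sz I i.

Inductive alg1_arrive (I : instance) (st : state) (c : nat) (i : 'I_n) : state -> Prop :=
| A1_bad b :
    is_open st c b -> ~~ good st c b -> fits I st c b i ->
    alg1_arrive I st c i (put_open I st c b i)
| A1_good b :
    (forall b', is_open st c b' -> ~~ good st c b' -> ~~ fits I st c b' i) ->
    is_open st c b -> good st c b -> fits I st c b i ->
    alg1_arrive I st c i (move st i (Some (inl (c, b))))
| A1_new b :
    (forall b', is_open st c b' -> ~~ fits I st c b' i) ->
    ~~ is_open st c b ->
    alg1_arrive I st c i (put_new I st c b i).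

(* FirstFit migration of the items [its] (in this order) out of bin src of
   instance c, with bins ordered L (existing bins: Bad ones, then Good ones)
   followed by the bins N newly opened during this migration, in order. *)
Inductive ff_migrate (I : instance) (c src : nat) (L : seq nat) :
    seq nat -> seq 'I_n -> state -> state -> Prop :=
| FF_nil N st : ff_migrate I c src L N [::] st st
| FF_fit N j js st b st' :
    b \in L ++ N -> fits I st c b j ->
    (forall b', b' \in take (index b (L ++ N)) (L ++ N) -> ~~ fits I st c b' j) ->
    ff_migrate I c src L N js (put_open I st c b j) st' ->
    ff_migrate I c src L N (j :: js) st st'
| FF_new N j js st b st' :
    (forall b', b' \in L ++ N -> ~~ fits I st c b' j) ->
    ~~ is_open st c b -> b != src ->
    ff_migrate I c src L (rcons N b) js (put_new I st c b j) st' ->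
    ff_migrate I c src L N (j :: js) st st'.

(* Departure of item i; the nat is the number of migrations performed. *)
Inductive depart (I : instance) (alpha : R) (st : state) (i : 'I_n) :
    state -> nat -> Prop :=
| D_junk k :
    loc st i = Some (inr k) ->
    depart I alpha st i (move st i None) 0
| D_nomig c b :
    loc st i = Some (inl (c, b)) ->
    ~~ (good st c b && (load I (move st i None) c b < alpha)) ->
    depart I alpha st i (move st i None) 0
| D_mig c b its Lb Lg st' :
    loc st i = Some (inl (c, b)) ->
    good st c b -> load I (move st i None) c b < alpha ->
    uniq its -> (forall j, (j \in its) = in_bin (move st i None) c b j) ->
    uniq (Lb ++ Lg) ->
    (forall b', (b' \in Lb ++ Lg) = (b' != b) && is_open (move st i None) c b') ->
    all (fun b' => ~~ good st c b') Lb -> all (good st c) Lg ->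
    ff_migrate I c b (Lb ++ Lg) [::] its (move st i None) st' ->
    depart I alpha st i st' (size its).

(* Algorithm 2: if #items >= rho then rho := 2 rho (this initialises the new
   Algorithm 1 instance for class log2 rho and a new junk bin). *)
Definition new_guess (st : state) : nat :=
  if (2 ^ guess st <= nitems st)%N then (guess st).+1 else guess st.

Definition set_guess (st : state) (k : nat) : state := State k (loc st) (good st).

Inductive arrive (I : instance) (st : state) (i : 'I_n) : state -> Prop :=
| Ar_alg c st' :
    class_of (sz I i) c -> (c < new_guess st)%N ->
    alg1_arrive I (set_guess st (new_guess st)) c i st' ->
    arrive I st i st'
| Ar_junk :
    (forall c, class_of (sz I i) c -> (new_guess st <= c)%N) ->
    arrive I st i (move (set_guess st (new_guess st)) i (Some (inr (new_guess st)))).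

Inductive run (I : instance) (alpha : R) : state -> seq event -> state -> nat -> Prop :=
| Run_nil st : run I alpha st [::] st 0
| Run_arr st i evs st1 st2 m :
    arrive I st i st1 -> run I alpha st1 evs st2 m ->
    run I alpha st (inl i :: evs) st2 m
| Run_dep st i evs st1 k st2 m :
    depart I alpha st i st1 k -> run I alpha st1 evs st2 m ->
    run I alpha st (inr i :: evs) st2 (k + m).

End DBP.

(* Main.v *)
Require Import Defs.
From HB Require Import structures.
From mathcomp Require Import all_boot all_order all_algebra.
From mathcomp Require Import reals.
From mathcomp Require Import ring lra.
Import Order.TTheory GRing.Theory Num.Theory.
Local Open Scope ring_scope.
Set Implicit Arguments. Unset Strict Implicit.

Section Aux.
Variable R : realType.

Lemma mx_ge0 (a : R) : 0 <= Num.max 0 a.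
Proof. by rewrite le_max lexx. Qed.

Lemma mx_ge (a : R) : a <= Num.max 0 a.
Proof. by rewrite le_max lexx orbT. Qed.

Lemma mx_mono (a b : R) : a <= b -> Num.max 0 a <= Num.max 0 b.
Proof. by move=> h; rewrite ge_max !le_max lexx h /= orbT. Qed.

Lemma mx_zero (a : R) : a <= 0 -> Num.max 0 a = 0.
Proof. by move=> h; rewrite max_l. Qed.

Lemma mx_shift (a s : R) : 0 <= s -> Num.max 0 (a + s) <= Num.max 0 a + s.
Proof.
move=> hs; rewrite ge_max; apply/andP; split.
  have := mx_ge0 a; lra.
have := mx_ge a; lra.
Qed.

Lemma sum_support (T : eqType) (f : T -> R) (s1 s2 : seq T) :
  uniq s1 -> uniq s2 -> (forall p, f p != 0 -> p \in s1) -> {subset s1 <= s2} ->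
  \sum_(p <- s1) f p = \sum_(p <- s2) f p.
Proof.
move=> u1 u2 sup sub.
rewrite [RHS](bigID (fun p => p \in s1)) /=.
rewrite [X in _ + X]big1 ?addr0; last first.
  move=> p Hp; apply/eqP; apply/negPn/negP => /sup; by rewrite (negbTE Hp).
rewrite -[in RHS]big_filter. apply: perm_big. apply: uniq_perm => //.
  by rewrite filter_uniq.
move=> p; rewrite mem_filter; case: (boolP (p \in s1)) => //= /sub ->.
by [].
Qed.

End Aux.
Section Main.
Variable R : realType.
Variable n : nat.
Variable I : instance R n.
Variable alpha : R.
Hypothesis Halpha : 0 < alpha < 2^-1.
Hypothesis HI : valid_instance I.

Definition K : R := 4 * alpha / (1 - 2 * alpha).

Lemma K_ge0 : 0 <= K.
Proof.
rewrite /K; case/andP: Halpha => h1 h2.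
apply: divr_ge0; lra.
Qed.

Definition phi (st : state n) (p : nat * nat) : R :=
  if good st p.1 p.2 && is_open st p.1 p.2 then
    K * 2%:R ^+ p.1 * Num.max 0 (fpar R p.1 - load I st p.1 p.2) else 0.

Definition occ (st : state n) : seq (nat * nat) :=
  undup (pmap (fun i => match loc st i with Some (inl p) => Some p | _ => None end)
     (enum 'I_n)).

Definition Phi st := \sum_(p <- occ st) phi st p.

Lemma phi_ge0 st p : 0 <= phi st p.
Proof.
rewrite /phi; case: ifP => // _.
apply: mulr_ge0; last exact: mx_ge0.
apply: mulr_ge0; first exact: K_ge0.
by apply: exprn_ge0.
Qed.

Lemma Phi_ge0 st : 0 <= Phi st.
Proof. by apply: sumr_ge0 => p _; apply: phi_ge0. Qed.

Lemma phi_occ st p : phi st p != 0 -> p \in occ st.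
Proof.
rewrite /phi; case: ifP; last by rewrite eqxx.
case: p => c b /= /andP [_ /existsP [i Hi]] _.
rewrite mem_undup mem_pmap; apply/mapP; exists i; first by rewrite mem_enum.
by move: Hi; rewrite /in_bin => /eqP ->.
Qed.

Lemma Phi_sup st s : uniq s -> {subset occ st <= s} ->
  Phi st = \sum_(p <- s) phi st p.
Proof.
move=> us sub; apply: sum_support => //; first exact: undup_uniq.
exact: phi_occ.
Qed.

Lemma Phi_except st st' p0 :
  (forall p, p != p0 -> phi st' p <= phi st p) ->
  Phi st' - phi st' p0 <= Phi st - phi st p0.
Proof.
move=> H.
set s := undup (p0 :: occ st ++ occ st').
have us : uniq s := undup_uniq _.
have p0s : p0 \in s by rewrite mem_undup inE eqxx.
rewrite (@Phi_sup st s) //; last by move=> p Hp; rewrite mem_undup inE mem_cat Hp orbT.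
rewrite (@Phi_sup st' s) //; last by move=> p Hp; rewrite mem_undup inE mem_cat Hp !orbT.
rewrite !(bigD1_seq p0) //=.
have E : forall a b : R, a + b - a = b by move=> a b; rewrite addrC addKr.
rewrite !E; apply: ler_sum => p Hp; exact: H.
Qed.

Lemma Phi_mono st st' :
  (forall p, phi st' p <= phi st p) -> Phi st' <= Phi st.
Proof.
move=> H; have := @Phi_except st st' (0%N, 0%N) (fun p _ => H p).
have := H (0%N, 0%N); lra.
Qed.

Lemma phi_ext st st' c b :
  (forall i, in_bin st' c b i = in_bin st c b i) -> good st' c b = good st c b ->
  phi st' (c, b) = phi st (c, b).
Proof.
move=> Hin Hg; rewrite /phi /= Hg /is_open (eq_existsb Hin) /load.
by rewrite (eq_bigl _ _ Hin).
Qed.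

Lemma phi_other st st2 j q p :
  (forall i, loc st2 i = upd_loc (loc st) j q i) ->
  good st2 p.1 p.2 = good st p.1 p.2 ->
  loc st j != Some (inl p) -> q != Some (inl p) -> phi st2 p = phi st p.
Proof.
case: p => c b Hl Hg H1 H2; apply: phi_ext => // i. move: (Hl i).
rewrite /in_bin /upd_loc => E; rewrite {}E; case: ifP => // /eqP ->.
by rewrite (negbTE H1) (negbTE H2).
Qed.

Lemma in_bin_move (st : state n) (j : 'I_n) q c b (i : 'I_n) :
  in_bin (move st j q) c b i = if i == j then q == Some (inl (c, b)) else in_bin st c b i.
Proof. by rewrite /in_bin /move /= /upd_loc; case: ifP. Qed.

Lemma sum_split (P : pred 'I_n) (F : 'I_n -> R) j :
  \sum_(i | P i) F i = (if P j then F j else 0) + \sum_(i | (i != j) && P i) F i.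
Proof.
rewrite (bigID (pred1 j)) /=; congr (_ + _); last first.
  by apply: eq_bigl => i; rewrite andbC.
case: (boolP (P j)) => Pj.
  by apply: big_pred1 => i /=; case: eqP => [->|]; rewrite ?Pj ?andbF ?andbT.
by rewrite big_pred0 // => i; case: eqP => [->|]; rewrite ?(negbTE Pj) ?andbF.
Qed.

Lemma load_move st j q c b :
  load I (move st j q) c b =
  load I st c b - (if in_bin st c b j then sz I j else 0)
    + (if q == Some (inl (c, b)) then sz I j else 0).
Proof.
rewrite /load (sum_split _ _ j) [in RHS](sum_split _ _ j) in_bin_move eqxx.
rewrite (@eq_bigl _ _ _ _ _ (fun i => (i != j) && in_bin (move st j q) c b i)
   (fun i => (i != j) && in_bin st c b i)); last first.
  by move=> i; rewrite in_bin_move; case: eqP.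
set S := \sum_(i | _) _; lra.
Qed.

Lemma not_open_load st c b : ~~ is_open st c b -> load I st c b = 0.
Proof.
move=> /existsPn H; rewrite /load big_pred0 // => i; exact: negbTE (H i).
Qed.

Lemma sz_ge0 j : 0 <= sz I j.
Proof. by case: (HI j) => _ [/andP [h _] _]. Qed.

Lemma phi_move_in st c b j :
  ~~ in_bin st c b j -> is_open st c b ->
  phi (move st j (Some (inl (c, b)))) (c, b) <= phi st (c, b).
Proof.
move=> Hj Ho; rewrite /phi /= Ho.
have -> : is_open (move st j (Some (inl (c, b)))) c b.
  by apply/existsP; exists j; rewrite in_bin_move !eqxx.
rewrite andbT; case: (good st c b) => //.
rewrite load_move (negbTE Hj) eqxx.
apply: ler_wpM2l.
  by apply: mulr_ge0; [exact: K_ge0 | exact: exprn_ge0].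
apply: mx_mono; have := sz_ge0 j; lra.
Qed.

Lemma phi_put_open st c b j :
  ~~ in_bin st c b j -> is_open st c b ->
  phi (put_open I st c b j) (c, b) <= phi st (c, b).
Proof.
move=> Hj Ho; rewrite /put_open; case: ifP => Hf; last exact: phi_move_in.
rewrite {1}/phi /= /upd_lab !eqxx /=.
rewrite (_ : load I _ c b = load I (move st j (Some (inl (c, b)))) c b) //.
rewrite load_move (negbTE Hj) eqxx mx_zero ?mulr0; last by lra.
case: ifP => _ //; exact: phi_ge0.
Qed.

Lemma phi_put_new st c b j :
  ~~ is_open st c b -> phi (put_new I st c b j) (c, b) <= phi st (c, b).
Proof.
move=> Ho.
have Hj : ~~ in_bin st c b j by apply: contra Ho => h; apply/existsP; exists j.
rewrite {2}/phi /= (negbTE Ho) andbF.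
rewrite /phi /= /upd_lab !eqxx /=.
rewrite (_ : load I _ c b = load I (move st j (Some (inl (c, b)))) c b) //.
rewrite load_move (negbTE Hj) eqxx not_open_load //.
case: ifP => // /andP [Hf _].
by rewrite mx_zero ?mulr0 //; lra.
Qed.


Definition Cinv (st : state n) :=
  forall i c b, loc st i = Some (inl (c, b)) -> class_of (sz I i) c.

Lemma t_gt0 c : 0 < 2%:R ^+ c :> R.
Proof. by apply: exprn_gt0. Qed.

Lemma class_up x c : class_of x c -> 2%:R ^+ c * x <= 1 :> R.
Proof.
case/andP => _ h.
have tp := t_gt0 c.
have := ler_wpM2l (ltW tp) h; rewrite mulfV //; exact: lt0r_neq0.
Qed.

Lemma class_low x c : class_of x c -> (2 * 2%:R ^+ c)^-1 < x :> R.
Proof. by case/andP; rewrite exprS. Qed.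

Lemma fpar_ge c : 2^-1 <= fpar R c.
Proof.
case: c => [|c] //=.
have h2 : 2 <= 2%:R ^+ c.+1 :> R.
  rewrite exprS; have := @exprn_ege1 R c 2%:R; rewrite ler1n => /(_ isT); lra.
have : (2%:R ^+ c.+1)^-1 <= 2^-1 :> R.
  by rewrite lef_pV2 ?posrE ?t_gt0 //.
lra.
Qed.

Lemma mig_bound st c b its : Cinv st -> uniq its ->
  (forall j, (j \in its) = in_bin st c b j) -> good st c b ->
  load I st c b < alpha -> (size its)%:R <= phi st (c, b).
Proof.
case Eits: its => [|j0 js]; first by rewrite /= phi_ge0.
rewrite -Eits => Hc Hu Hm Hg Hl.
have Ho : is_open st c b by apply/existsP; exists j0; rewrite -Hm Eits mem_head.
rewrite /phi /= Hg Ho /=.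
set t := 2%:R ^+ c.
have tp : 0 < t by apply: t_gt0.
set x := load I st c b.
have Hlow : (size its)%:R * (2 * t)^-1 <= x.
  rewrite -(card_uniqP Hu).
  have -> : #|its| = #|[pred i | in_bin st c b i]|.
    by apply: eq_card => i; rewrite !inE Hm.
  rewrite mulrC mulr_natr -sumr_const /x /load.
  apply: ler_sum => i; rewrite inE => Hi.
  apply: ltW; apply: class_low; apply: (Hc i c b); exact/eqP.
have HN : (size its)%:R <= 2 * t * x.
  have := @ler_wpM2l R (2 * t) _ _ _ Hlow.
  rewrite mulrCA mulfV ?mulr1; last by apply: lt0r_neq0; lra.
  by apply; lra.
have HM : 2^-1 - x <= Num.max 0 (fpar R c - x) by have := @mx_ge R (fpar R c - x); have := fpar_ge c; lra.
case/andP: Halpha => a0 a1. have Hx : x < alpha := Hl.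
have Hd : 1 - 2 * alpha != 0 by apply: lt0r_neq0; lra.
have HK : K * (2^-1 - x) - 2 * x = 2 * (alpha - x) / (1 - 2 * alpha).
  by rewrite /K; field.
have HK2 : 0 <= 2 * (alpha - x) / (1 - 2 * alpha).
  by apply: divr_ge0; lra.
have HKM : K * (2^-1 - x) <= K * Num.max 0 (fpar R c - x) by apply: ler_wpM2l => //; exact: K_ge0.
have A1 : 2 * x <= K * Num.max 0 (fpar R c - x) by lra.
have A2 := ler_wpM2l (ltW tp) A1.
have E1 : K * t * Num.max 0 (fpar R c - x) = t * (K * Num.max 0 (fpar R c - x)) by ring.
have E2 : 2 * t * x = t * (2 * x) by ring.
lra.
Qed.

Lemma phi_depart st i c b : Cinv st -> loc st i = Some (inl (c, b)) ->
  phi (move st i None) (c, b) <= phi st (c, b) + K.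
Proof.
move=> Hc Hl.
have Hin : in_bin st c b i by rewrite /in_bin Hl.
have Ho : is_open st c b by apply/existsP; exists i.
rewrite {1}/phi /=; case: ifP => [/andP [Hg _]|_]; last first.
  by have := phi_ge0 st (c, b); have := K_ge0; lra.
rewrite /phi /= Hg Ho /= load_move Hin /=.
set t := 2%:R ^+ c; set x := load I st c b; set s := sz I i.
have Hts : t * s <= 1 by apply: class_up; exact: (Hc i c b).
have Hs : 0 <= s by apply: sz_ge0.
have M : Num.max 0 (fpar R c - (x - s + 0)) <= Num.max 0 (fpar R c - x) + s.
  have -> : fpar R c - (x - s + 0) = fpar R c - x + s by ring.
  exact: mx_shift.
have Kt : 0 <= K * t by apply: mulr_ge0; [exact: K_ge0 | exact: ltW (t_gt0 c)].
have A1 := ler_wpM2l Kt M.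
have A2 := ler_wpM2l K_ge0 Hts.
have E : K * t * (Num.max 0 (fpar R c - x) + s) =
   K * t * Num.max 0 (fpar R c - x) + K * (t * s) by ring.
lra.
Qed.

Lemma open_move (st : state n) (j : 'I_n) q c b :
  is_open st c b -> ~~ in_bin st c b j -> is_open (move st j q) c b.
Proof.
case/existsP => i0 Hi0 Hj; apply/existsP; exists i0; rewrite in_bin_move.
case: eqP => [E|//]; by move: Hj; rewrite -E Hi0.
Qed.

Lemma step_ok (st st2 : state n) c src b (j : 'I_n) :
  Cinv st -> loc st j = Some (inl (c, src)) -> b != src ->
  (forall i, loc st2 i = upd_loc (loc st) j (Some (inl (c, b))) i) ->
  (forall c' b', (c', b') != (c, b) -> good st2 c' b' = good st c' b') ->
  phi st2 (c, b) <= phi st (c, b) ->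
  [/\ Cinv st2, (forall j', loc st j' = None -> loc st2 j' = None),
      Phi st2 - phi st2 (c, src) <= Phi st - phi st (c, src),
      (forall j', j' != j -> in_bin st2 c src j' = in_bin st c src j') /\
      ~~ in_bin st2 c src j & in_bin st2 c b j /\
      (forall b', b' != src -> is_open st c b' -> is_open st2 c b')].
Proof.
move=> Hc Hlj Hbs Hloc Hgood Hphi.
have Hneq : (c, b) != (c, src) by rewrite xpair_eqE eqxx Hbs.
have Hin2 : forall c' b' i, in_bin st2 c' b' i = in_bin (move st j (Some (inl (c, b)))) c' b' i.
  by move=> c' b' i; rewrite /in_bin Hloc.
split.
- move=> i c' b'; rewrite Hloc /upd_loc; case: ifP => [/eqP -> [<- _]|_].
    exact: (Hc j c src).
  exact: Hc.
- move=> j' Hj'; rewrite Hloc /upd_loc; case: ifP => // /eqP E.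
  by move: Hj'; rewrite E Hlj.
- apply: Phi_except => -[c' b'] Hp.
  case: (eqVneq (c', b') (c, b)) => [[-> ->]//|Hpb].
  rewrite (@phi_other st st2 j (Some (inl (c, b)))) //.
  + by rewrite /= Hgood.
  + by rewrite Hlj; apply: contra Hp => /eqP [-> ->].
  + by apply: contra Hpb => /eqP [-> ->].
- split; first by move=> j' Hj'; rewrite Hin2 in_bin_move (negbTE Hj').
  rewrite Hin2 in_bin_move eqxx; apply/eqP => -[E]; by move: Hbs; rewrite E eqxx.
- split; first by rewrite Hin2 in_bin_move !eqxx.
  move=> b' Hb' Ho.
  have -> : is_open st2 c b' = is_open (move st j (Some (inl (c, b)))) c b'.
    by apply: eq_existsb => i; rewrite Hin2.
  apply: open_move => //; rewrite /in_bin Hlj; apply/eqP => -[E].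
  by move: Hb'; rewrite E eqxx.
Qed.

Lemma ff_ok c src L N its (st st' : state n) :
  ff_migrate I c src L N its st st' -> Cinv st -> uniq its ->
  (forall j, (j \in its) = in_bin st c src j) ->
  (forall b', b' \in L ++ N -> (b' != src) && is_open st c b') ->
  [/\ Cinv st', (forall j, loc st j = None -> loc st' j = None),
      Phi st' - phi st' (c, src) <= Phi st - phi st (c, src) & phi st' (c, src) = 0].
Proof.
elim => {N its st st'}.
- move=> N st Hc _ Hm _; split => //.
  rewrite /phi /=.
  have -> : is_open st c src = false.
    by apply/negbTE/existsPn => i; rewrite -Hm.
  by rewrite andbF.
- move=> N j js st b st' Hb Hfit _ Hff IH Hc Hu Hm HL.
  have Hlj : loc st j = Some (inl (c, src)) by apply/eqP; rewrite -/(in_bin st c src j) -Hm mem_head.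
  case/andP: (HL b Hb) => Hbs Hob.
  have Hjb : ~~ in_bin st c b j.
    by rewrite /in_bin Hlj; apply/eqP => -[E]; move: Hbs; rewrite E eqxx.
  have Hloc : forall i, loc (put_open I st c b j) i = upd_loc (loc st) j (Some (inl (c, b))) i.
    by move=> i; rewrite /put_open; case: ifP.
  have Hgood : forall c' b', (c', b') != (c, b) ->
      good (put_open I st c b j) c' b' = good st c' b'.
    move=> c' b' H; rewrite /put_open; case: ifP => //= _.
    by rewrite /upd_lab -xpair_eqE (negbTE H).
  have [C2 N2 P2 [M2 J2] [B2 O2]] :=
    step_ok Hc Hlj Hbs Hloc Hgood (phi_put_open Hjb Hob).
  case/andP: Hu => Hju Hu.
  have Hm2 : forall j', (j' \in js) = in_bin (put_open I st c b j) c src j'.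
    move=> j'; case: (eqVneq j' j) => [->|Hne].
      by rewrite (negbTE Hju) (negbTE J2).
    by rewrite M2 // -Hm inE (negbTE Hne).
  have HL2 : forall b', b' \in L ++ N -> (b' != src) && is_open (put_open I st c b j) c b'.
    by move=> b' Hb'; case/andP: (HL b' Hb') => H1 H2; rewrite H1 O2.
  have [C3 N3 P3 Z3] := IH C2 Hu Hm2 HL2.
  split => //; [by move=> j' /N2 /N3 | lra].
- move=> N j js st b st' Hnf Hno Hbs Hff IH Hc Hu Hm HL.
  have Hlj : loc st j = Some (inl (c, src)) by apply/eqP; rewrite -/(in_bin st c src j) -Hm mem_head.
  have Hloc : forall i, loc (put_new I st c b j) i = upd_loc (loc st) j (Some (inl (c, b))) i.
    by [].
  have Hgood : forall c' b', (c', b') != (c, b) ->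
      good (put_new I st c b j) c' b' = good st c' b'.
    move=> c' b' H /=.
    by rewrite /upd_lab -xpair_eqE (negbTE H).
  have [C2 N2 P2 [M2 J2] [B2 O2]] :=
    step_ok Hc Hlj Hbs Hloc Hgood (phi_put_new j Hno).
  case/andP: Hu => Hju Hu.
  have Hm2 : forall j', (j' \in js) = in_bin (put_new I st c b j) c src j'.
    move=> j'; case: (eqVneq j' j) => [->|Hne].
      by rewrite (negbTE Hju) (negbTE J2).
    by rewrite M2 // -Hm inE (negbTE Hne).
  have HL2 : forall b', b' \in L ++ rcons N b ->
      (b' != src) && is_open (put_new I st c b j) c b'.
    move=> b'; rewrite -cats1 catA mem_cat inE => /orP [Hb'|/eqP ->].
      by case/andP: (HL b' Hb') => H1 H2; rewrite H1 O2.
    by rewrite Hbs; apply/existsP; exists j.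
  have [C3 N3 P3 Z3] := IH C2 Hu Hm2 HL2.
  split => //; [by move=> j' /N2 /N3 | lra].
Qed.


Lemma move_None_ok (st : state n) i :
  Cinv st -> Cinv (move st i None) /\ (forall j, loc st j = None -> loc (move st i None) j = None).
Proof.
move=> Hc; split.
  by move=> j c b; rewrite /= /upd_loc; case: ifP => // _; apply: Hc.
by move=> j; rewrite /= /upd_loc; case: ifP.
Qed.

Lemma Phi_move_out (st : state n) i c b :
  Cinv st -> loc st i = Some (inl (c, b)) -> Phi (move st i None) <= Phi st + K.
Proof.
move=> Hc Hl.
have P1 := @Phi_except st (move st i None) (c, b).
have D := phi_depart Hc Hl.
suff H : forall p, p != (c, b) -> phi (move st i None) p <= phi st p.
  by have := P1 H; lra.
move=> p Hp; rewrite (@phi_other st (move st i None) i None) //.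
by rewrite Hl; apply: contra Hp => /eqP [->].
Qed.

Lemma depart_ok (st : state n) i st1 k : depart I alpha st i st1 k -> Cinv st ->
  [/\ Cinv st1, (forall j, loc st j = None -> loc st1 j = None) &
      k%:R + Phi st1 <= Phi st + K].
Proof.
case.
- move=> k0 Hl Hc; have [C1 L1] := move_None_ok i Hc; split => //.
  have : Phi (move st i None) <= Phi st.
    apply: Phi_mono => p; rewrite (@phi_other st (move st i None) i None) //.
    by rewrite Hl.
  have := K_ge0; lra.
- move=> c b Hl _ Hc; have [C1 L1] := move_None_ok i Hc; split => //.
  have := Phi_move_out Hc Hl; lra.
- move=> c b its Lb Lg st' Hl Hg Hload Hu Hm HuL HmL _ _ Hff Hc.
  have [C1 L1] := move_None_ok i Hc.
  have HL : forall b', b' \in (Lb ++ Lg) ++ [::] ->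
      (b' != b) && is_open (move st i None) c b'.
    by move=> b'; rewrite cats0 HmL.
  have [C3 N3 P3 Z3] := ff_ok Hff C1 Hu Hm HL.
  split => //; first by move=> j /L1 /N3.
  have Hmb := mig_bound C1 Hu Hm Hg Hload.
  have P1 := @Phi_except st (move st i None) (c, b).
  have D := phi_depart Hc Hl.
  suff H : forall p, p != (c, b) -> phi (move st i None) p <= phi st p.
    by have := P1 H; lra.
  move=> p Hp; rewrite (@phi_other st (move st i None) i None) //.
  by rewrite Hl; apply: contra Hp => /eqP [->].
Qed.

Lemma arr_step (st st2 : state n) c b j :
  loc st j = None ->
  (forall i, loc st2 i = upd_loc (loc st) j (Some (inl (c, b))) i) ->
  (forall c' b', (c', b') != (c, b) -> good st2 c' b' = good st c' b') ->
  class_of (sz I j) c -> Cinv st ->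
  phi st2 (c, b) <= phi st (c, b) ->
  [/\ Cinv st2, (forall i, i != j -> loc st2 i = loc st i) & Phi st2 <= Phi st].
Proof.
move=> Hl Hloc Hgood Hcl Hc Hphi; split.
- move=> i c' b'; rewrite Hloc /upd_loc; case: ifP => [/eqP -> [<- _] //|_]; exact: Hc.
- by move=> i Hi; rewrite Hloc /upd_loc (negbTE Hi).
- apply: Phi_mono => -[c' b'].
  case: (eqVneq (c', b') (c, b)) => [[-> ->]//|Hpb].
  rewrite (@phi_other st st2 j (Some (inl (c, b)))) //.
  + by rewrite /= Hgood.
  + by rewrite Hl.
  + by apply: contra Hpb => /eqP [-> ->].
Qed.

Lemma arrive_ok (st : state n) i st1 : arrive I st i st1 -> Cinv st -> loc st i = None ->
  [/\ Cinv st1, (forall j, j != i -> loc st1 j = loc st j) & Phi st1 <= Phi st].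
Proof.
case.
- move=> c st' Hcl _ Ha1 Hc Hl.
  set st0 := set_guess st (new_guess st).
  have Hl0 : loc st0 i = None by [].
  have Hc0 : Cinv st0 by [].
  have Hni : forall b, ~~ in_bin st0 c b i by move=> b; rewrite /in_bin Hl0.
  case: Ha1 => [b Hob _ _ | b _ Hob _ _ | b _ Hno].
  + apply: (@arr_step st0 _ c b i) => //.
    * by move=> i'; rewrite /put_open; case: ifP.
    * move=> c' b' H; rewrite /put_open; case: ifP => //= _.
      by rewrite /upd_lab -xpair_eqE (negbTE H).
    * exact: phi_put_open (Hni b) Hob.
  + apply: (@arr_step st0 _ c b i) => //.
    exact: phi_move_in (Hni b) Hob.
  + apply: (@arr_step st0 _ c b i) => //.
    * move=> c' b' H /=.
      by rewrite /upd_lab -xpair_eqE (negbTE H).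
    * exact: phi_put_new.
- move=> _ Hc Hl; split.
  + move=> j c b; rewrite /= /upd_loc; case: ifP => // _; exact: Hc.
  + by move=> j Hj; rewrite /= /upd_loc (negbTE Hj).
  + apply: Phi_mono => p.
    by rewrite (@phi_other st _ i (Some (inr (new_guess st)))) // Hl.
Qed.

Definition isr (e : event n) : bool := if e is inr _ then true else false.

Lemma run_ok (st : state n) evs st' m : run I alpha st evs st' m -> uniq evs -> Cinv st ->
  (forall i, inl i \in evs -> loc st i = None) ->
  m%:R + Phi st' <= Phi st + K * (count isr evs)%:R.
Proof.
elim => {st evs st' m}.
- by move=> st _ _ _ /=; rewrite mulr0 addr0 add0r.
- move=> st i evs st1 st2 m Har Hrun IH Hu Hc Hn.
  case/andP: Hu => Hni Hu.
  have Hl : loc st i = None by apply: Hn; rewrite mem_head.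
  have [C1 L1 P1] := arrive_ok Har Hc Hl.
  have Hn1 : forall j, inl j \in evs -> loc st1 j = None.
    move=> j Hj.
    have Hji : j != i by apply/eqP => E; move: Hni; rewrite -E Hj.
    by rewrite L1 //; apply: Hn; rewrite inE Hj orbT.
  have := IH Hu C1 Hn1; rewrite /= add0n; lra.
- move=> st i evs st1 k st2 m Hd Hrun IH Hu Hc Hn.
  case/andP: Hu => _ Hu.
  have [C1 L1 P1] := depart_ok Hd Hc.
  have Hn1 : forall j, inl j \in evs -> loc st1 j = None.
    by move=> j Hj; apply: L1; apply: Hn; rewrite inE Hj orbT.
  have := IH Hu C1 Hn1; rewrite /= natrD -nat1r mulrDr mulr1; lra.
Qed.

Lemma Phi_init : Phi (init_state n) = 0.
Proof.
rewrite /Phi /occ.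
have -> : pmap (fun i => match loc (init_state n) i with
           | Some (inl p) => Some p | _ => None end) (enum 'I_n) = [::].
  by elim: (enum 'I_n).
by rewrite big_nil.
Qed.

End Main.

Unset Implicit Arguments.

Theorem lemma13 (R : realType) (n : nat) (alpha : R) (I : instance R n)
    (evs : seq (event n)) (st : state n) (m : nat) :
  0 < alpha < 2^-1 ->
  valid_instance I ->
  valid_schedule I evs ->
  run I alpha (init_state n) evs st m ->
  m%:R <= 4 * alpha / (1 - 2 * alpha) * n%:R.
Proof.
move=> Ha HI [Hperm _] Hrun.
have Hu : uniq evs.
  rewrite (perm_uniq Hperm) cat_uniq; apply/and3P; split.
  - by rewrite map_inj_uniq ?enum_uniq // => x y [].
  - by apply/hasPn => e /mapP [j _ ->]; apply/mapP => -[k _].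
  - by rewrite map_inj_uniq ?enum_uniq // => x y [].
have Hcount : count (@isr n) evs = n.
  rewrite (permP Hperm) count_cat !count_map.
  rewrite (@eq_count _ _ pred0) // count_pred0 (@eq_count _ _ predT) //.
  by rewrite add0n count_predT -enumT size_enum_ord.
have := @run_ok R n I alpha Ha HI _ _ _ _ Hrun Hu.
have Hc0 : Cinv I (init_state n) by move=> i c b.
move=> /(_ Hc0 (fun i _ => erefl)).
rewrite Phi_init Hcount add0r /K => H.
have := @Phi_ge0 R n I alpha Ha st; lra.
Qed.
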